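(* Let $r\ge 0$ and consider the $U_q(\mathfrak{sl}_2)$-module $M(\lambda)\otimes V^{\otimes r}$ over $\mathbb{Q}(q,\lambda)$. For $\rho=(b_0,b_1,\dots,b_r)\in\mathbb{N}^{r+1}$ put \[ v_\rho := F^{b_r}\Big(\cdots F^{b_1}\big(F^{b_0}(v_{\lambda,0})\otimes v_{1,0}\big)\cdots\otimes v_{1,0}\Big). \] Then: (1) For $r\ge 2$ and $1\le i\le r-1$, the map $\mathrm{cap}_i:=\mathrm{id}_{M(\lambda)}\otimes\mathrm{id}_V^{\otimes(i-1)}\otimes\cap\otimes\mathrm{id}_V^{\otimes(r-i-1)}:M(\lambda)\otimes V^{\otimes r}\to M(\lambda)\otimes V^{\otimes (r-2)}$ (the cap applied to the $i$-th and $(i+1)$-th tensor factors $V$) satisfies \[ \mathrm{cap}_i\big(v_{(\dots,b_{i-1},b_i,b_{i+1},b_{i+2},\dots)}\big)=-q^{-1}[b_i]_q\,v_{(\dots,b_{i-1}+b_i+b_{i+1}-1,b_{i+2},\dots)} \] (entries not displayed are unchanged). (2) For $1\le i\le r+1$, the map $\mathrm{cup}_i:=\mathrm{id}_{M(\lambda)}\otimes\mathrm{id}_V^{\otimes(i-1)}\otimes\cup\otimes\mathrm{id}_V^{\otimes(r-i+1)}:M(\lambda)\otimes V^{\otimes r}\to M(\lambda)\otimes V^{\otimes (r+2)}$ (inserting two new tensor factors $V$ in positions $i,i+1$) satisfies \[ \mathrm{cup}_i(v_\rho)=q[2]_q\,v_{(\dots,b_{i-1},1,0,b_i,\dots)}-q\,v_{(\dots,b_{i-1}+1,0,0,b_i,\dots)}-q\,v_{(\dots,b_{i-1},0,1,b_i,\dots)}.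 \] (3) For $r\ge1$, the map $\xi\otimes\mathrm{id}_V^{\otimes(r-1)}$ satisfies \[ v_{(b_0,b_1,\dots)}\mapsto\big(\lambda^{-1}q^{b_0}-\lambda q[b_0]_q\big)v_{(0,b_0+b_1,\dots)}+\lambda q^2[b_0]_q\,v_{(1,b_0+b_1-1,\dots)}. \]
   Context: $U_q(\mathfrak{sl}_2)$ is the $\mathbb{Q}(q)$-algebra generated by $K^{\pm1},E,F$ with $KE=q^2EK$, $KF=q^{-2}FK$, $KK^{-1}=1=K^{-1}K$, $EF-FE=\frac{K-K^{-1}}{q-q^{-1}}$, acting on tensor products via $\Delta(K^{\pm1})=K^{\pm1}\otimes K^{\pm1}$, $\Delta(E)=E\otimes 1+K^{-1}\otimes E$, $\Delta(F)=F\otimes K+1\otimes F$. Quantum integers: $[n]_q=\frac{q^n-q^{-n}}{q-q^{-1}}$; for a formal variable $\lambda$ ($=q^\beta$), $[\beta+k]_q=\frac{\lambda q^k-\lambda^{-1}q^{-k}}{q-q^{-1}}$. The universal Verma module $M(\lambda)$ has $\mathbb{Q}(q,\lambda)$-basis $v_{\lambda,i}$ ($i\ge0$) with $Kv_{\lambda,i}=\lambda q^{-2i}v_{\lambda,i}$, $Fv_{\lambda,i}=v_{\lambda,i+1}$, $Ev_{\lambda,i}=[i]_q[\beta-i+1]_qv_{\lambda,i-1}$. $V$ is the $2$-dimensional module with basis $v_{1,0},v_{1,1}$, $Kv_{1,j}=q^{1-2j}v_{1,j}$, $Fv_{1,0}=v_{1,1}$, $Fv_{1,1}=0$, $Ev_{1,1}=v_{1,0}$,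 $Ev_{1,0}=0$. The maps $\cap:V\otimes V\to\mathbb{Q}(q,\lambda)$ and $\cup:\mathbb{Q}(q,\lambda)\to V\otimes V$ are $\cap(v_{1,0}\otimes v_{1,0})=\cap(v_{1,1}\otimes v_{1,1})=0$, $\cap(v_{1,0}\otimes v_{1,1})=1$, $\cap(v_{1,1}\otimes v_{1,0})=-q^{-1}$, and $\cup(1)=-q\,v_{1,0}\otimes v_{1,1}+v_{1,1}\otimes v_{1,0}$. The map $\xi:M(\lambda)\otimes V\to M(\lambda)\otimes V$ is given by $\xi(v_{\lambda,k}\otimes v_{1,0})=\lambda^{-1}q^{2k}v_{\lambda,k}\otimes v_{1,0}-q(q-q^{-1})[k]_q[\beta-k+1]_qv_{\lambda,k-1}\otimes v_{1,1}$ and $\xi(v_{\lambda,k}\otimes v_{1,1})=(\lambda^{-1}+\lambda q^2-\lambda^{-1}q^{2(k+1)})v_{\lambda,k}\otimes v_{1,1}-\lambda^{-1}q^{2(k+1)}(q-q^{-1})v_{\lambda,k+1}\otimes v_{1,0}$. In the formulas, when $i=1$ the entry $b_{i-1}$ is $b_0$; terms with coefficient $[0]_q=0$ are zero. *)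

(* Defs.v *)
From HB Require Import structures.
From mathcomp Require Import all_boot all_order all_algebra.
From mathcomp Require Export fraction.
Set Implicit Arguments. Unset Strict Implicit. Unset Printing Implicit Defensive.
Import Order.TTheory GRing.Theory Num.Theory.
Local Open Scope ring_scope.

Definition Fql : fieldType := {fraction {poly {poly rat}}}.
(* q is the inner variable, lambda (= q^beta) the outer one *)
Definition qv : Fql := FracField.tofrac (('X : {poly rat})%:P).
Definition lamv : Fql := FracField.tofrac ('X : {poly {poly rat}}).

Section Model.
Variables (F : fieldType) (q lam : F).

Definition qint (n : nat) : F := (q ^+ n - q ^- n) / (q - q^-1).
Definition qintb (k : int) : F := (lam * q ^ k - lam^-1 * q ^ (- k)) / (q - q^-1).

(* Basis of M(lambda) (x) V^{(x) s}: v_{lambda,k} (x) v_{1,j_1} (x) ... (x) v_{1,j_s},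
   encoded as (k, [:: j_1; ...; j_s]) with j = false for v_{1,0}, true for v_{1,1}. *)
Definition basis := (nat * seq bool)%type.
(* Vectors are finite formal linear combinations of basis vectors;
   two vectors are equal iff all their coefficients agree (veq). *)
Definition vec := seq (F * basis).
Definition coef (x : vec) (b : basis) : F := \sum_(p <- x | p.2 == b) p.1.
Definition veq (x y : vec) : Prop := forall b, coef x b = coef y b.
Definition vscale (c : F) (x : vec) : vec := [seq (c * p.1, p.2) | p <- x].
Definition vadd (x y : vec) : vec := x ++ y.
Definition lin (f : basis -> vec) (x : vec) : vec :=
  flatten [seq vscale p.1 (f p.2) | p <- x].

(* K-eigenvalue of a tensor of V-basis vectors: K v_{1,j} = q^{1-2j} v_{1,j} *)
Definition Kw (js : seq bool) : F := \prod_(j <- js) (if j then q^-1 else q).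

(* action of F via the iterated coproduct Delta(F) = F (x) K + 1 (x) F:
   F acting on factor p, K on all factors to the right of p *)
Definition Fbasis (b : basis) : vec :=
  (Kw b.2, (b.1.+1, b.2)) ::
  [seq (Kw (drop i.+1 b.2), (b.1, set_nth false b.2 i true))
    | i <- iota 0 (size b.2) & ~~ nth false b.2 i].
Definition Fop : vec -> vec := lin Fbasis.

Definition tens0 (x : vec) : vec := [seq (p.1, (p.2.1, rcons p.2.2 false)) | p <- x].

Definition vrho (rho : seq nat) : vec :=
  match rho with
  | [::] => [::]
  | b0 :: bs => foldl (fun x b => iter b Fop (tens0 x))
                      (iter b0 Fop [:: (1, (0%N, [::]))]) bs
  end.

Definition capv (a b : bool) : F :=
  match a, b with false, true => 1 | true, false => - q^-1 | _, _ => 0 end.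
(* cap_i: cap on the i-th and (i+1)-th V factors (1-indexed) *)
Definition cap_basis (i : nat) (b : basis) : vec :=
  [:: (capv (nth false b.2 i.-1) (nth false b.2 i),
       (b.1, take i.-1 b.2 ++ drop i.+1 b.2))].
Definition capi (i : nat) : vec -> vec := lin (cap_basis i).

(* cup_i: insert cup(1) = -q v_{1,0}(x)v_{1,1} + v_{1,1}(x)v_{1,0}
   as the new V factors in positions i, i+1 (1-indexed) *)
Definition cup_basis (i : nat) (b : basis) : vec :=
  [:: (- q, (b.1, take i.-1 b.2 ++ [:: false; true] ++ drop i.-1 b.2));
      (1, (b.1, take i.-1 b.2 ++ [:: true; false] ++ drop i.-1 b.2))].
Definition cupi (i : nat) : vec -> vec := lin (cup_basis i).

Definition xi_basis (b : basis) : vec :=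
  let k := b.1 in
  match b.2 with
  | [::] => [::]
  | j :: js =>
    if j then
      [:: (lam^-1 + lam * q ^+ 2 - lam^-1 * q ^+ (2 * k.+1), (k, true :: js));
          (- (lam^-1 * q ^+ (2 * k.+1) * (q - q^-1)), (k.+1, false :: js))]
    else
      [:: (lam^-1 * q ^+ (2 * k), (k, false :: js));
          (- (q * (q - q^-1) * qint k * qintb (1 - k%:Z)), (k.-1, true :: js))]
  end.
Definition xi_id : vec -> vec := lin xi_basis.

End Model.

(* Main.v *)
Require Import Defs.
From HB Require Import structures.
From mathcomp Require Import all_boot all_order all_algebra.
From mathcomp Require Import ring zify.
From Stdlib Require Import FunctionalExtensionality.
Import GRing.Theory.
Local Open Scope ring_scope.

Section Pf.
Variables (F : fieldType) (q lam : F).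
Hypotheses (q0 : q != 0) (l0 : lam != 0) (qq : q - q^-1 != 0).

Notation fn := (basis -> F).
Definition pr (x : vec F) (g : fn) : F := \sum_(p <- x) p.1 * g p.2.

Lemma pr_nil g : pr [::] g = 0. Proof. by rewrite /pr big_nil. Qed.
Lemma pr_cons p x g : pr (p :: x) g = p.1 * g p.2 + pr x g.
Proof. by rewrite /pr big_cons. Qed.
Lemma pr_cat x y g : pr (x ++ y) g = pr x g + pr y g.
Proof. by rewrite /pr big_cat. Qed.
Lemma pr_scale c x g : pr (vscale c x) g = c * pr x g.
Proof. by rewrite /pr big_map mulr_sumr; apply: eq_bigr => p _ /=; rewrite mulrA. Qed.
Lemma pr_lin f x g : pr (lin f x) g = pr x (fun b => pr (f b) g).
Proof.
rewrite /lin; elim: x => [|p x IH] /=; first by rewrite !pr_nil.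
by rewrite pr_cat pr_scale IH pr_cons.
Qed.
Lemma pr_tens0 x g : pr (tens0 x) g = pr x (fun b => g (b.1, b.2 ++ [:: false])).
Proof. by rewrite /pr big_map; apply: eq_bigr => p _ /=; rewrite cats1. Qed.
Lemma pr_lincomb x a b g1 g2 :
  pr x (fun c => a * g1 c + b * g2 c) = a * pr x g1 + b * pr x g2.
Proof. rewrite /pr !mulr_sumr -big_split; apply: eq_bigr => p _ /=; ring. Qed.
Lemma pr_scaleg x a g : pr x (fun c => a * g c) = a * pr x g.
Proof. rewrite /pr !mulr_sumr; apply: eq_bigr => p _ /=; ring. Qed.
Lemma pr_zero x : pr x (fun _ => 0) = 0.
Proof. by rewrite /pr big1 // => p _; rewrite mulr0. Qed.

Definition homog (n : nat) (x : vec F) := all (fun p => size p.2.2 == n) x.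
Lemma pr_homog n x g1 g2 : homog n x -> (forall c, size c.2 = n -> g1 c = g2 c) ->
  pr x g1 = pr x g2.
Proof.
move=> /allP H E; rewrite /pr big_seq [RHS]big_seq; apply: eq_bigr => p /H /eqP Hp.
by rewrite E.
Qed.

Definition FD (g : fn) : fn := fun c => pr (Fbasis q c) g.
Lemma pr_Fop x g : pr (Fop q x) g = pr x (FD g). Proof. exact: pr_lin. Qed.
Lemma pr_iterF n x g : pr (iter n (Fop q) x) g = pr x (iter n FD g).
Proof. by elim: n g => [|n IH] g //=; rewrite pr_Fop IH -iterSr. Qed.

Definition R (x : bool) (h : fn) : fn := fun c => h (c.1, c.2 ++ [:: x]).
Fixpoint DS (S : seq nat) (g : fn) : fn :=
  if S is b :: S' then R false (iter b FD (DS S' g)) else g.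

Notation step := (fun x b => iter b (Fop q) (tens0 x)).
Lemma pr_foldl S x g : pr (foldl step x S) g = pr x (DS S g).
Proof. by elim: S x => [|b S IH] x //=; rewrite IH pr_iterF pr_tens0. Qed.

Lemma pr_base h : pr [:: (1, (0%N, [::]))] h = h (0%N, [::]).
Proof. by rewrite pr_cons pr_nil mul1r addr0. Qed.

Lemma vrho_cat s t : s != [::] -> vrho q (s ++ t) = foldl step (vrho q s) t.
Proof. by case: s => // b s _ /=; rewrite foldl_cat. Qed.

Lemma vrho_rcons_add P a c :
  vrho q (P ++ [:: (a + c)%N]) = iter c (Fop q) (vrho q (P ++ [:: a])).
Proof.
case: P => [|b P] /=; first by rewrite addnC iterD.
by rewrite !foldl_cat /= addnC iterD.
Qed.

Lemma pr_vrho b s g : pr (vrho q (b :: s)) g = iter b FD (DS s g) (0%N, [::]).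
Proof. by rewrite /= pr_foldl pr_iterF pr_base. Qed.

Lemma homog_Fbasis c : homog (size c.2) (Fbasis q c).
Proof.
rewrite /homog /Fbasis /= eqxx /= all_map; apply/allP => i.
rewrite mem_filter mem_iota add0n => /andP [_ /andP [_ Hi]] /=.
by rewrite size_set_nth; apply/eqP/maxn_idPr.
Qed.
Lemma homog_lin n f x : (forall c, size c.2 = n -> homog n (f c)) -> homog n x ->
  homog n (lin f x).
Proof.
move=> Hf; elim: x => [|p x IH] // /andP [/eqP Hp Hx].
change (homog n (vscale p.1 (f p.2) ++ lin f x)).
rewrite /homog all_cat; apply/andP; split; last exact: IH.
rewrite /vscale all_map; exact: Hf.
Qed.
Lemma homog_Fop n x : homog n x -> homog n (Fop q x).
Proof. by apply: homog_lin => c <-; apply: homog_Fbasis. Qed.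
Lemma homog_iterF k n x : homog n x -> homog n (iter k (Fop q) x).
Proof. by elim: k => [|k IH] //= H; apply: homog_Fop; apply: IH. Qed.
Lemma homog_tens0 n x : homog n x -> homog n.+1 (tens0 x).
Proof.
rewrite /homog /tens0 all_map => /allP H; apply/allP => p /H /= /eqP Hp.
by rewrite size_rcons Hp.
Qed.
Lemma homog_vrho s : s != [::] -> homog (size s).-1 (vrho q s).
Proof.
case: s => // b s _.
suff H : forall s n x, homog n x -> homog (n + size s) (foldl step x s).
  by apply: (H s 0%N); apply: homog_iterF.
elim => [|c s' IH] n x Hx /=; first by rewrite addn0.
rewrite -addSnnS; apply: IH; apply: homog_iterF; exact: homog_tens0.
Qed.

Lemma pr_vrho_ext s g1 g2 : s != [::] ->
  (forall c, size c.2 = (size s).-1 -> g1 c = g2 c) -> pr (vrho q s) g1 = pr (vrho q s) g2.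
Proof. move=> /homog_vrho H E; exact: pr_homog H E. Qed.


Definition Ssum (js : seq bool) (h : seq bool -> F) : F :=
  \sum_(m <- iota 0 (size js) | ~~ nth false js m)
     Kw q (drop m.+1 js) * h (set_nth false js m true).

Lemma FD_E g k js : FD g (k, js) = Kw q js * g (k.+1, js) + Ssum js (fun a => g (k, a)).
Proof. by rewrite /FD /Fbasis pr_cons /pr big_map big_filter. Qed.

Lemma Kw_nil : Kw q [::] = 1. Proof. by rewrite /Kw big_nil. Qed.
Lemma Kw_cons x js : Kw q (x :: js) = (if x then q^-1 else q) * Kw q js.
Proof. by rewrite /Kw big_cons. Qed.
Lemma Kw_cat A B : Kw q (A ++ B) = Kw q A * Kw q B.
Proof. by rewrite /Kw big_cat. Qed.

Lemma Ssum_nil h : Ssum [::] h = 0. Proof. by rewrite /Ssum big_nil. Qed.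
Lemma Ssum_cons x js h : Ssum (x :: js) h =
  (if x then 0 else Kw q js * h (true :: js)) + Ssum js (fun a => h (x :: a)).
Proof.
rewrite /Ssum /= big_cons /=.
rewrite -[1%N]/(1 + 0)%N iotaDl big_map.
have -> : \sum_(j <- iota 0 (size js) | ~~ nth false (x :: js) (1 + j))
    Kw q (drop (1 + j).+1 (x :: js)) * h (set_nth false (x :: js) (1 + j) true) =
  \sum_(m <- iota 0 (size js) | ~~ nth false js m)
     Kw q (drop m.+1 js) * h (x :: set_nth false js m true).
  by apply: eq_big => m; rewrite add1n.
by case: x; rewrite /= ?add0r ?drop0.
Qed.

Lemma Ssum_cat A B h : Ssum (A ++ B) h =
  Kw q B * Ssum A (fun a => h (a ++ B)) + Ssum B (fun b => h (A ++ b)).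
Proof.
elim: A h => [|x A IH] h /=; first by rewrite Ssum_nil mulr0 add0r.
rewrite !Ssum_cons IH Kw_cat /=; case: x; ring.
Qed.

Lemma Ssum_lincomb js a b h1 h2 :
  Ssum js (fun x => a * h1 x + b * h2 x) = a * Ssum js h1 + b * Ssum js h2.
Proof. rewrite /Ssum !mulr_sumr -big_split; apply: eq_bigr => m _ /=; ring. Qed.
Lemma Ssum_scale js a h : Ssum js (fun x => a * h x) = a * Ssum js h.
Proof. rewrite /Ssum !mulr_sumr; apply: eq_bigr => m _ /=; ring. Qed.

Lemma Ssum_ext_size js h1 h2 : (forall a, size a = size js -> h1 a = h2 a) ->
  Ssum js h1 = Ssum js h2.
Proof.
elim: js h1 h2 => [|x js IH] h1 h2 E; first by rewrite !Ssum_nil.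
rewrite !Ssum_cons E // (IH (fun a => h1 (x :: a)) (fun a => h2 (x :: a))) //.
by move=> a Ha; apply: E; rewrite /= Ha.
Qed.

Lemma FD_lincomb a b g1 g2 :
  FD (fun c => a * g1 c + b * g2 c) = (fun c => a * FD g1 c + b * FD g2 c).
Proof. by apply: functional_extensionality => c; rewrite /FD pr_lincomb. Qed.
Lemma FD_scale a g : FD (fun c => a * g c) = (fun c => a * FD g c).
Proof. by apply: functional_extensionality => c; rewrite /FD pr_scaleg. Qed.
Lemma FD_zero : FD (fun _ => 0) = (fun _ => 0).
Proof. by apply: functional_extensionality => c; rewrite /FD pr_zero. Qed.
Lemma iterFD_zero n : iter n FD (fun _ => 0) = (fun _ => 0).
Proof. by elim: n => //= n ->; rewrite FD_zero. Qed.
Lemma iterFD_scale n a g : iter n FD (fun c => a * g c) = (fun c => a * iter n FD g c).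
Proof. by elim: n => //= n ->; rewrite FD_scale. Qed.
Lemma iterFD_lincomb n a b g1 g2 :
  iter n FD (fun c => a * g1 c + b * g2 c) = (fun c => a * iter n FD g1 c + b * iter n FD g2 c).
Proof. by elim: n => //= n ->; rewrite FD_lincomb. Qed.

Lemma FD_ext_size (P : pred nat) g1 g2 :
  (forall c, P (size c.2) -> g1 c = g2 c) -> forall c, P (size c.2) -> FD g1 c = FD g2 c.
Proof. by move=> E c Pc; apply: (pr_homog _ _ g1 g2 (homog_Fbasis c)) => d Hd; apply: E; rewrite Hd. Qed.
Lemma iterFD_ext_size (P : pred nat) n g1 g2 :
  (forall c, P (size c.2) -> g1 c = g2 c) -> forall c, P (size c.2) ->
  iter n FD g1 c = iter n FD g2 c.
Proof. by move=> E; elim: n => //= n IH; apply: FD_ext_size. Qed.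

Lemma FD_nil g k : FD g (k, [::]) = g (k.+1, [::]).
Proof. by rewrite FD_E Kw_nil Ssum_nil mul1r addr0. Qed.
Lemma iterFD_nil n g k : iter n FD g (k, [::]) = g ((k + n)%N, [::]).
Proof. by elim: n k => [|n IH] k /=; rewrite ?addn0 // FD_nil IH addSnnS. Qed.

Lemma FD_R0 g : R false (FD g) = (fun c => q * FD (R false g) c + R true g c).
Proof.
apply: functional_extensionality => -[k js]; rewrite /R /= !FD_E /= Ssum_cat.
rewrite !Ssum_cons !Ssum_nil Kw_cat !Kw_cons Kw_nil /=; ring.
Qed.
Lemma FD_R1 g : R true (FD g) = (fun c => q^-1 * FD (R true g) c).
Proof.
apply: functional_extensionality => -[k js]; rewrite /R /= !FD_E /= Ssum_cat.
rewrite !Ssum_cons !Ssum_nil Kw_cat !Kw_cons Kw_nil /=; ring.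
Qed.

Lemma FD_R0p g k d : FD g (k, d ++ [:: false]) = q * FD (R false g) (k, d) + g (k, d ++ [:: true]).
Proof. exact: (congr1 (fun f => f (k, d)) (FD_R0 g)). Qed.

Lemma qq2 : q * q - 1 != 0.
Proof.
apply: contraNneq qq => H; have -> : q - q^-1 = (q * q - 1) / q by field.
by rewrite H mul0r.
Qed.

Lemma qint0 : qint q 0 = 0.
Proof. by rewrite /qint expr0 invr1 subrr mul0r. Qed.
Lemma qintS n : qint q n.+1 = q * qint q n + q^-1 ^+ n.
Proof.
have qn : q ^+ n != 0 by rewrite expf_neq0.
rewrite /qint exprVn exprS; field; by rewrite qn q0 qq2.
Qed.

Lemma iterFD_R1 n g : R true (iter n FD g) = (fun c => q^-1 ^+ n * iter n FD (R true g) c).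
Proof.
elim: n => [|n IH] /=.
  by apply: functional_extensionality => c; rewrite expr0 mul1r.
rewrite FD_R1 IH FD_scale; apply: functional_extensionality => c.
by rewrite exprS mulrA.
Qed.

Lemma iterFD_R0 n g : R false (iter n FD g) =
  (fun c => q ^+ n * iter n FD (R false g) c + qint q n * iter n.-1 FD (R true g) c).
Proof.
elim: n => [|n IH] /=.
  by apply: functional_extensionality => c; rewrite qint0 expr0 mul1r mul0r addr0.
rewrite FD_R0 IH FD_lincomb iterFD_R1; apply: functional_extensionality => c.
rewrite qintS; case: n IH => [|n] IH /=.
  by rewrite qint0 !expr0 expr1; ring.
rewrite !exprS; ring.
Qed.

Section Comm.
Variables (Op : fn -> fn) (m : nat).
Hypothesis FD_Op : forall g c, (m <= size c.2)%N -> FD (Op g) c = Op (FD g) c.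
Hypothesis R0_Op : forall g c, (m <= size c.2)%N -> R false (Op g) c = Op (R false g) c.

Lemma iterFD_Op n g c : (m <= size c.2)%N -> iter n FD (Op g) c = Op (iter n FD g) c.
Proof.
elim: n c => [|n IH] c Hc //=.
rewrite -FD_Op //; apply: (FD_ext_size (fun s => m <= s)%N) => // d Hd.
Qed.

Lemma DS_Op S g c : (m <= size c.2)%N -> DS S (Op g) c = Op (DS S g) c.
Proof.
elim: S g c => [|b S IH] g c Hc //=.
rewrite -R0_Op // /R /=.
rewrite (iterFD_ext_size (fun s => m <= s)%N b (DS S (Op g)) (Op (DS S g))).
- by rewrite iterFD_Op // size_cat addn1 ltnW.
- by move=> d Hd; apply: IH.
- by rewrite /= size_cat addn1 ltnW.
Qed.
Lemma iterDS_Op b S g c : (m <= size c.2)%N ->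
  iter b FD (DS S (Op g)) c = Op (iter b FD (DS S g)) c.
Proof.
move=> Hc; rewrite (iterFD_ext_size (fun s => m <= s)%N b (DS S (Op g)) (Op (DS S g))) //.
  exact: iterFD_Op.
by move=> d Hd; apply: DS_Op.
Qed.
End Comm.

Definition CD i g : fn := fun c => pr (cap_basis q i c) g.
Lemma CD_cat n g k A a b B : size A = n ->
  CD n.+1 g (k, A ++ a :: b :: B) = Defs.capv q a b * g (k, A ++ B).
Proof.
move=> HA; rewrite /CD /cap_basis pr_cons pr_nil addr0 /=.
rewrite nth_cat HA ltnn subnn /= nth_cat HA ltnNge leqnSn /= subSnn /=.
rewrite take_size_cat // -[A ++ a :: b :: B]/(A ++ [:: a; b] ++ B) catA.
by rewrite drop_size_cat // size_cat HA addn2.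
Qed.

Lemma decomp2 n (js : seq bool) : (n.+2 <= size js)%N ->
  exists A a b B, size A = n /\ js = A ++ a :: b :: B.
Proof.
move=> H; exists (take n js).
have Hd : (2 <= size (drop n js))%N by rewrite size_drop; lia.
case E: (drop n js) Hd => [|a [|b B]] // _.
exists a, b, B; split; last by rewrite -E cat_take_drop.
by rewrite size_takel //; lia.
Qed.

Lemma FD_CD n g c : (n.+2 <= size c.2)%N -> FD (CD n.+1 g) c = CD n.+1 (FD g) c.
Proof.
case: c => k js /= H; have [A [a [b [B [HA ->]]]]] := decomp2 _ _ H.
rewrite FD_E CD_cat // CD_cat // FD_E Ssum_cat !Ssum_cons /= Ssum_cat.
rewrite (Ssum_ext_size A (fun a0 => CD n.+1 g (k, a0 ++ a :: b :: B))
                       (fun a0 => Defs.capv q a b * g (k, a0 ++ B))); last first.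
  by move=> a0 Ha0; rewrite CD_cat // Ha0.
have -> : (fun a0 => CD n.+1 g (k, A ++ a :: b :: a0)) = (fun a0 => Defs.capv q a b * g (k, A ++ a0)).
  by apply: functional_extensionality => a0; rewrite CD_cat.
rewrite !Ssum_scale !CD_cat // !Kw_cat !Kw_cons.
by case: a; case: b; rewrite /Defs.capv /=; field.
Qed.

Lemma R0_CD n g c : (n.+2 <= size c.2)%N -> R false (CD n.+1 g) c = CD n.+1 (R false g) c.
Proof.
case: c => k js /= H; have [A [a [b [B [HA ->]]]]] := decomp2 _ _ H.
by rewrite /R /= -catA /= !CD_cat // catA.
Qed.

Definition UD i g : fn := fun c => pr (cup_basis q i c) g.
Lemma UD_cat n g k A B : size A = n ->
  UD n.+1 g (k, A ++ B) = - q * g (k, A ++ false :: true :: B) + 1 * g (k, A ++ true :: false :: B).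
Proof.
move=> HA; rewrite /UD /cup_basis !pr_cons pr_nil addr0 /=.
by rewrite take_size_cat // drop_size_cat.
Qed.

Lemma decomp0 n (js : seq bool) : (n <= size js)%N -> exists A B, size A = n /\ js = A ++ B.
Proof.
move=> H; exists (take n js), (drop n js); split; last by rewrite cat_take_drop.
by rewrite size_takel.
Qed.

Lemma FD_UD n g c : (n <= size c.2)%N -> FD (UD n.+1 g) c = UD n.+1 (FD g) c.
Proof.
case: c => k js /= H; have [A [B [HA ->]]] := decomp0 _ _ H.
rewrite FD_E !UD_cat // !FD_E Ssum_cat !Ssum_cat !Ssum_cons /=.
rewrite (Ssum_ext_size A (fun a0 => UD n.+1 g (k, a0 ++ B))
   (fun a0 => - q * g (k, a0 ++ false :: true :: B) + 1 * g (k, a0 ++ true :: false :: B)));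
  last by move=> a0 Ha0; rewrite UD_cat // Ha0.
have -> : (fun a0 => UD n.+1 g (k, A ++ a0)) =
   (fun a0 => - q * g (k, A ++ false :: true :: a0) + 1 * g (k, A ++ true :: false :: a0)).
  by apply: functional_extensionality => a0; rewrite UD_cat.
rewrite !Ssum_lincomb !Kw_cat !Kw_cons /=; by field.
Qed.

Lemma R0_UD n g c : (n <= size c.2)%N -> R false (UD n.+1 g) c = UD n.+1 (R false g) c.
Proof.
case: c => k js /= H; have [A [B [HA ->]]] := decomp0 _ _ H.
by rewrite /R /= -catA !UD_cat // /= -!catA.
Qed.

Definition XD g : fn := fun c => pr (xi_basis q lam c) g.
Definition qbb (Q : F) := (lam * q / Q - lam^-1 * Q / q) / (q - q^-1).
Lemma qintE n : qint q n = (q ^+ n - (q ^+ n)^-1) / (q - q^-1).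
Proof. by []. Qed.
Lemma qintbE k : qintb q lam (1 - k%:Z) = qbb (q ^+ k).
Proof.
rewrite /qintb /qbb expfzDr // opprB expfzDr // -exprnP.
rewrite -invr_expz -exprnP exprN1 expr1z. 
by rewrite !mulrA.
Qed.

Lemma e2k k : q ^+ (2 * k) = q ^+ k * q ^+ k.
Proof. by rewrite mulnC exprM expr2. Qed.

Lemma XD_F g k B : XD g (k, false :: B) =
  lam^-1 * (q ^+ k * q ^+ k) * g (k, false :: B) +
  (- (q * (q - q^-1) * qint q k * qbb (q ^+ k))) * g (k.-1, true :: B).
Proof.
by rewrite /XD /xi_basis /= !pr_cons pr_nil addr0 /= qintbE e2k.
Qed.

Lemma XD_T g k B : XD g (k, true :: B) =
  (lam^-1 + lam * q ^+ 2 - lam^-1 * (q * q * (q ^+ k * q ^+ k))) * g (k, true :: B) +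
  (- (lam^-1 * (q * q * (q ^+ k * q ^+ k)) * (q - q^-1))) * g (k.+1, false :: B).
Proof.
by rewrite /XD /xi_basis /= !pr_cons pr_nil addr0 /= e2k !exprS; congr (_ * _ + _ * _); ring.
Qed.

Lemma qk0 k : q ^+ k != 0. Proof. by rewrite expf_neq0. Qed.

Lemma FD_XD g c : (1 <= size c.2)%N -> FD (XD g) c = XD (FD g) c.
Proof.
case: c => k [|x B] //= _.
case: x.
- rewrite FD_E XD_T Ssum_cons /= XD_T !FD_E !Ssum_cons /=.
  have -> : (fun a => XD g (k, true :: a)) = (fun a =>
     (lam^-1 + lam * q ^+ 2 - lam^-1 * (q * q * (q ^+ k * q ^+ k))) * g (k, true :: a) +
  (- (lam^-1 * (q * q * (q ^+ k * q ^+ k)) * (q - q^-1))) * g (k.+1, false :: a)).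
    by apply: functional_extensionality => a; rewrite XD_T.
  rewrite Ssum_lincomb !Kw_cons !exprS; have := qk0 k; move: (q ^+ k) => Q HQ.
  field; by rewrite q0 l0.
- rewrite FD_E XD_F Ssum_cons /= XD_F XD_T !FD_E !Ssum_cons /=.
  have -> : (fun a => XD g (k, false :: a)) = (fun a =>
     lam^-1 * (q ^+ k * q ^+ k) * g (k, false :: a) +
  (- (q * (q - q^-1) * qint q k * qbb (q ^+ k))) * g (k.-1, true :: a)).
    by apply: functional_extensionality => a; rewrite XD_F.
  rewrite Ssum_lincomb !Kw_cons.
  case: k => [|k] /=.
    rewrite !qintE !expr0 invr1 subrr !mul0r !mulr0 !mul0r /qbb !expr1.
    field; by rewrite q0 l0 qq2.
  rewrite !qintE /qbb !exprS; have := qk0 k; move: (q ^+ k) => Q HQ.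
  field; by rewrite HQ q0 l0 qq2.
Qed.

Lemma R0_XD g c : (1 <= size c.2)%N -> R false (XD g) c = XD (R false g) c.
Proof. by case: c => k [|[] B] //= _; rewrite /R /= ?XD_T ?XD_F. Qed.

Lemma veq_pr x y : (forall g, pr x g = pr y g) -> veq x y.
Proof.
move=> H b; have E z : coef z b = pr z (fun c => (c == b)%:R).
  rewrite /coef /pr big_mkcond; apply: eq_bigr => p _ /=.
  by case: eqP => _; rewrite ?mulr1 ?mulr0.
by rewrite !E H.
Qed.

Lemma part1 r rho i : size rho = r.+1 -> (2 <= r)%N -> (1 <= i <= r - 1)%N ->
     veq (capi q i (vrho q rho))
         (vscale (- q^-1 * qint q (nth 0%N rho i))
            (vrho q (take i.-1 rho ++
               (nth 0%N rho i.-1 + nth 0%N rho i + nth 0%N rho i.+1).-1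
                 :: drop i.+2 rho))).
Proof.
move=> Hs Hr /andP [Hi1 Hi2]; case: i Hi1 Hi2 => [|n] // _ Hn /=.
set P := take n rho; set bh := nth 0%N rho n; set bi := nth 0%N rho n.+1.
set bj := nth 0%N rho n.+2; set S := drop n.+3 rho.
have Erho : rho = (P ++ [:: bh]) ++ [:: bi, bj & S].
  rewrite -catA /P /bh /bi /bj /S /= -(drop_nth 0%N) ?Hs; last by lia.
  rewrite -(drop_nth 0%N) ?Hs; last by lia.
  rewrite -(drop_nth 0%N) ?Hs; last by lia.
  by rewrite cat_take_drop.
have HP : size P = n by rewrite /P size_takel // Hs; lia.
have nP : P ++ [:: bh] != [::] by case: (P).
apply: veq_pr => g; rewrite pr_scale /capi pr_lin.
change (pr (vrho q rho) (CD n.+1 g) = (- q^-1 * qint q bi) *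
   pr (vrho q (P ++ (bh + bi + bj).-1 :: S)) g).
rewrite -cat1s catA vrho_cat; last by case: (P).
rewrite pr_foldl {1}Erho vrho_cat // pr_foldl.
set H := DS S g.
have key : forall c, size c.2 = n -> DS [:: bi, bj & S] (CD n.+1 g) c =
   (- q^-1 * qint q bi) * iter (bi.-1 + bj) FD H c.
  move=> c Hc; rewrite /= iterFD_R0.
  set Psi := R false (iter bj FD (DS S (CD n.+1 g))).
  rewrite (iterFD_ext_size (fun s => s == n)%N bi (R false Psi) (fun _ => 0)); last 2 first.
  - move=> [k d] /= /eqP Hd; rewrite /Psi /R /=.
    rewrite (iterDS_Op _ _ (FD_CD n) (R0_CD n)); last by rewrite /= !size_cat Hd /=; lia.
    by rewrite -catA /= CD_cat // /Defs.capv mul0r.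
  - by apply/eqP.
  rewrite (iterFD_ext_size (fun s => s == n)%N bi.-1 (R true Psi)
     (fun d => - q^-1 * iter bj FD H d)); last 2 first.
  - move=> [k d] /= /eqP Hd; rewrite /Psi /R /=.
    rewrite (iterDS_Op _ _ (FD_CD n) (R0_CD n)); last by rewrite /= !size_cat Hd /=; lia.
    by rewrite -catA /= CD_cat // /Defs.capv cats0.
  - by apply/eqP.
  by rewrite iterFD_zero iterFD_scale iterD mulr0 add0r mulrA [qint q bi * _]mulrC.
rewrite (pr_vrho_ext _ _ (fun c => (- q^-1 * qint q bi) * iter (bi.-1 + bj) FD H c) nP);
  last by move=> c Hc; apply: key; rewrite Hc size_cat addn1.
rewrite pr_scaleg -pr_iterF -vrho_rcons_add.
case E: bi => [|bi'].
  by rewrite qint0 !mulr0 !mul0r.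
by congr (_ * pr (vrho q (P ++ [:: _])) _); lia.
Qed.

Lemma part2 r rho i : size rho = r.+1 -> (1 <= i <= r + 1)%N ->
     veq (cupi q i (vrho q rho))
         (vadd (vscale (q * qint q 2) (vrho q (take i rho ++ 1%N :: 0%N :: drop i rho)))
         (vadd (vscale (- q) (vrho q (take i.-1 rho ++
                                (nth 0%N rho i.-1).+1 :: 0%N :: 0%N :: drop i rho)))
               (vscale (- q) (vrho q (take i rho ++ 0%N :: 1%N :: drop i rho))))).
Proof.
move=> Hs /andP [Hi1 Hi2]; case: i Hi1 Hi2 => [|n] // _ Hn /=.
set P := take n.+1 rho; set S := drop n.+1 rho.
have HP : size P = n.+1 by rewrite /P size_takel // Hs; lia.
have nP : P != [::] by rewrite -size_eq0 HP.
have EP : take n rho ++ [:: (nth 0%N rho n).+1, 0%N, 0%N & S] =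
    (take n rho ++ [:: (nth 0%N rho n + 1)%N]) ++ [:: 0%N, 0%N & S].
  by rewrite -catA addn1.
apply: veq_pr => g; rewrite !pr_cat !pr_scale /cupi pr_lin.
change (pr (vrho q rho) (UD n.+1 g) = q * qint q 2 * pr (vrho q (P ++ [:: 1%N, 0%N & S])) g +
  (- q * pr (vrho q (take n rho ++ [:: (nth 0%N rho n).+1, 0%N, 0%N & S])) g +
   - q * pr (vrho q (P ++ [:: 0%N, 1%N & S])) g)).
rewrite -{1}(cat_take_drop n.+1 rho) -/P -/S.
rewrite EP (vrho_cat (take n rho ++ _)); last by case: (take n rho).
rewrite vrho_rcons_add cats1 -(take_nth 0%N) ?Hs; last by lia.
rewrite -/P !vrho_cat // !pr_foldl pr_Fop.
set H := DS S g.
rewrite (pr_vrho_ext _ _ (fun c => q * qint q 2 * DS [:: 1%N, 0%N & S] g c +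
   1 * (- q * FD (DS [:: 0%N, 0%N & S] g) c + - q * DS [:: 0%N, 1%N & S] g c)) nP).
  by rewrite !pr_lincomb mul1r.
move=> [k d] /= Hd; rewrite HP /= in Hd.
rewrite (DS_Op _ _ (FD_UD n) (R0_UD n)) /=; last by rewrite Hd.
rewrite -/H -[d]cats0 UD_cat // FD_R0 FD_R0 /R /= -!catA /= cats0.
rewrite FD_R0p /R /= -!catA /= qintE; field; by rewrite q0 qq2.
Qed.

Lemma pr_xi x g : pr (xi_id q lam x) g = pr x (XD g).
Proof. exact: pr_lin. Qed.

Lemma R0iter_nil n H k : R false (iter n FD H) (k, [::]) =
  q ^+ n * H ((k + n)%N, [:: false]) + qint q n * H ((k + n.-1)%N, [:: true]).
Proof. by rewrite iterFD_R0 /= !iterFD_nil. Qed.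
Lemma R1iter_nil n H k : R true (iter n FD H) (k, [::]) =
  q^-1 ^+ n * H ((k + n)%N, [:: true]).
Proof. by rewrite iterFD_R1 /= !iterFD_nil. Qed.

Lemma part3 r rho : size rho = r.+1 -> (1 <= r)%N ->
     let b0 := nth 0%N rho 0 in let b1 := nth 0%N rho 1 in
     veq (xi_id q lam (vrho q rho))
         (vadd (vscale (lam^-1 * q ^+ b0 - lam * q * qint q b0)
                  (vrho q (0%N :: (b0 + b1)%N :: drop 2 rho)))
               (vscale (lam * q ^+ 2 * qint q b0)
                  (vrho q (1%N :: (b0 + b1).-1 :: drop 2 rho)))).
Proof.
case: rho => [|b0 [|b1 S]] // Hs Hr; first by move: Hs Hr => /= [<-].
move=> b0' b1'; rewrite {}/b0' {}/b1'.
have -> : nth 0%N [:: b0, b1 & S] 0 = b0 by reflexivity.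
have -> : nth 0%N [:: b0, b1 & S] 1 = b1 by reflexivity.
have -> : drop 2 [:: b0, b1 & S] = S by rewrite /= drop0.
apply: veq_pr => g; rewrite !pr_cat !pr_scale pr_xi.
rewrite !pr_vrho iterFD_nil /= FD_nil.
change (R false (iter b1 FD (DS S (XD g))) ((0 + b0)%N, [::]) =
  (lam^-1 * q ^+ b0 - lam * q * qint q b0) * R false (iter (b0 + b1) FD (DS S g)) (0%N, [::]) +
  lam * q ^+ 2 * qint q b0 * R false (iter (b0 + b1).-1 FD (DS S g)) (1%N, [::])).
rewrite /R /= (iterDS_Op _ _ FD_XD R0_XD) // XD_F.
change (iter b1 FD (DS S g) ((0 + b0)%N, [:: false])) with (R false (iter b1 FD (DS S g)) ((0 + b0)%N, [::])).
change (iter b1 FD (DS S g) ((0 + b0)%N.-1, [:: true])) with (R true (iter b1 FD (DS S g)) ((0 + b0)%N.-1, [::])).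
change (iter (b0 + b1) FD (DS S g) (0%N, [:: false])) with (R false (iter (b0 + b1) FD (DS S g)) (0%N, [::])).
change (iter (b0 + b1).-1 FD (DS S g) (1%N, [:: false])) with (R false (iter (b0 + b1).-1 FD (DS S g)) (1%N, [::])).
rewrite !R0iter_nil R1iter_nil add0n.
clear Hs Hr; case: b0 => [|b0]; case: b1 => [|b1]; rewrite /= ?add0n ?addn0 ?addSn ?addnS /= ?add0n.
- by rewrite qint0 !expr0; ring.
- by rewrite qint0 !expr0; ring.
- case: b0 => [|b0] /=.
    rewrite qint0 /qbb !qintE !expr0 !expr1; field; by rewrite q0 l0 qq2.
  rewrite qint0 /qbb !qintE !exprVn !expr0 !exprS; field; by rewrite q0 l0 qq2 qk0 oner_neq0.
rewrite /qbb !qintE !exprVn ?exprD !exprS ?exprD; field; by rewrite q0 l0 qq2 !qk0.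
Qed.

End Pf.


Lemma qv0 : qv != 0.
Proof. by rewrite /qv tofrac_eq0 polyC_eq0 polyX_eq0. Qed.
Lemma lamv0 : lamv != 0.
Proof. by rewrite /lamv tofrac_eq0 polyX_eq0. Qed.
Lemma gen_qq (K : fieldType) (x : K) : x != 0 -> x * x - 1 != 0 -> x - x^-1 != 0.
Proof.
move=> x0 H2; apply: contraNneq H2 => H; have -> : x * x - 1 = (x - x^-1) * x.
  by field.
by rewrite H mul0r.
Qed.

Lemma qvq : qv - qv^-1 != 0.
Proof.
apply: gen_qq; first exact: qv0.
rewrite /qv -tofracM -tofrac1 -tofracB tofrac_eq0 -polyCM -polyC1 -polyCB polyC_eq0.
apply/eqP => H; have := congr1 (horner^~ 0) H; rewrite !hornerE /=.
by move/eqP; rewrite oppr_eq0 oner_eq0.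
Qed.

Theorem lemma2p4 :
  (* (1) cap_i *)
  (forall (r : nat) (rho : seq nat) (i : nat),
     size rho = r.+1 -> (2 <= r)%N -> (1 <= i <= r - 1)%N ->
     veq (capi qv i (vrho qv rho))
         (vscale (- qv^-1 * qint qv (nth 0%N rho i))
            (vrho qv (take i.-1 rho ++
               (nth 0%N rho i.-1 + nth 0%N rho i + nth 0%N rho i.+1).-1
                 :: drop i.+2 rho)))) /\
  (* (2) cup_i *)
  (forall (r : nat) (rho : seq nat) (i : nat),
     size rho = r.+1 -> (1 <= i <= r + 1)%N ->
     veq (cupi qv i (vrho qv rho))
         (vadd (vscale (qv * qint qv 2) (vrho qv (take i rho ++ 1%N :: 0%N :: drop i rho)))
         (vadd (vscale (- qv) (vrho qv (take i.-1 rho ++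
                                (nth 0%N rho i.-1).+1 :: 0%N :: 0%N :: drop i rho)))
               (vscale (- qv) (vrho qv (take i rho ++ 0%N :: 1%N :: drop i rho)))))) /\
  (* (3) xi (x) id *)
  (forall (r : nat) (rho : seq nat),
     size rho = r.+1 -> (1 <= r)%N ->
     let b0 := nth 0%N rho 0 in let b1 := nth 0%N rho 1 in
     veq (xi_id qv lamv (vrho qv rho))
         (vadd (vscale (lamv^-1 * qv ^+ b0 - lamv * qv * qint qv b0)
                  (vrho qv (0%N :: (b0 + b1)%N :: drop 2 rho)))
               (vscale (lamv * qv ^+ 2 * qint qv b0)
                  (vrho qv (1%N :: (b0 + b1).-1 :: drop 2 rho))))).
Proof.
split; [|split].
- exact: (part1 _ _ _ qv0 lamv0 qvq).
- exact: (part2 _ _ _ qv0 lamv0 qvq).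
- exact: (part3 _ _ _ qv0 lamv0 qvq).
Qed.
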